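(* Let $p\geq 3$ be a prime and $s$ a positive integer. Then for every integer $n>p^{s}$ we have $$\nu_{p}\big(A_{p,(p-1)(p^s-1)}(n)\big)=1.$$
   Context: For an integer $m\geq 2$ and a positive integer $k$, the integers $A_{m,k}(n)$, $n\in\mathbb{N}=\{0,1,2,\ldots\}$, are defined by the formal power series identity $\prod_{i=0}^{\infty}\big(1-x^{m^{i}}\big)^{-k}=\sum_{n=0}^{\infty}A_{m,k}(n)x^{n}$. For a prime $p$, $\nu_p(n)$ denotes the $p$-adic valuation of the integer $n$, with $\nu_p(0)=+\infty$. *)

(* Defs.v *)
From mathcomp Require Import all_boot all_order all_algebra.
Set Implicit Arguments. Unset Strict Implicit. Unset Printing Implicit Defensive.
Import GRing.Theory.
Local Open Scope ring_scope.

(* Truncated geometric series 1 + x^d + x^(2d) + ... + x^(N d), i.e. the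
   power series (1 - x^d)^{-1} modulo terms of degree > N*d. *)
Definition geom_trunc (N d : nat) : {poly int} :=
  \sum_(j < N.+1) 'X^(j * d).

(* A_{m,k}(n) = [x^n] prod_{i>=0} (1 - x^{m^i})^{-k}.
   Only factors with i <= n matter (m^i > n for i > n since m >= 2), and in
   each factor only the terms of degree <= n matter, so the coefficient of
   x^n is that of the finite product below. *)
Definition A (m k n : nat) : int :=
  (\prod_(i < n.+1) (geom_trunc n (m ^ i)%N) ^+ k)`_n.

(* p-adic valuation of an integer (nu_p(0) = +oo is never equal to 1;
   here logn p 0 = 0, which is also <> 1). *)
Definition nu (p : nat) (z : int) : nat := logn p `|z|%N.

(* Main.v *)
Require Import Defs.
From mathcomp Require Import all_boot all_order all_algebra.
From mathcomp Require Import zify ring.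
Set Implicit Arguments. Unset Strict Implicit. Unset Printing Implicit Defensive.
Import GRing.Theory Num.Theory.
Local Open Scope ring_scope.


Definition cg (c : int) (M : nat) (f g : {poly int}) :=
  exists a b : {poly int}, f - g = c%:P * a + 'X^M * b.

Lemma cg_refl c M f : cg c M f f.
Proof. by exists 0, 0; rewrite subrr !mulr0 addr0. Qed.

Lemma cg_sym c M f g : cg c M f g -> cg c M g f.
Proof.
by case=> a [b e]; exists (-a), (-b); rewrite -opprB e !mulrN opprD.
Qed.

Lemma cg_trans c M f g h : cg c M f g -> cg c M g h -> cg c M f h.
Proof.
case=> a [b e] [a' [b' e']]; exists (a + a'), (b + b').
by rewrite -(subrKA g) e e' !mulrDr addrACA.
Qed.

Lemma cg_add c M f g f' g' : cg c M f g -> cg c M f' g' -> cg c M (f + f') (g + g').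
Proof.
case=> a [b e] [a' [b' e']]; exists (a + a'), (b + b').
by rewrite opprD addrACA e e' !mulrDr addrACA.
Qed.

Lemma cg_opp c M f g : cg c M f g -> cg c M (- f) (- g).
Proof. by case=> a [b e]; exists (-a), (-b); rewrite -opprD e !mulrN opprD. Qed.

Lemma cg_mull c M f g h : cg c M f g -> cg c M (h * f) (h * g).
Proof.
case=> a [b e]; exists (h * a), (h * b).
by rewrite -mulrBr e mulrDr !mulrA ![h * _]mulrC.
Qed.

Lemma cg_mul c M f g f' g' : cg c M f g -> cg c M f' g' -> cg c M (f * f') (g * g').
Proof.
move=> h1 h2; apply: (@cg_trans _ _ _ (g * f')).
  by rewrite ![_ * f']mulrC; apply: cg_mull.
exact: cg_mull.
Qed.

Lemma cg_exp c M f g k : cg c M f g -> cg c M (f ^+ k) (g ^+ k).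
Proof.
move=> h; elim: k => [|k IH]; first exact: cg_refl.
by rewrite !exprS; apply: cg_mul.
Qed.

Lemma cg_prod c M (K : nat) (F G : 'I_K -> {poly int}) :
  (forall i, cg c M (F i) (G i)) -> cg c M (\prod_(i < K) F i) (\prod_(i < K) G i).
Proof.
move=> h; elim/big_rec2: _ => [|i x y _ hxy]; first exact: cg_refl.
exact: cg_mul.
Qed.

Lemma cg_sum c M (K : nat) (F G : 'I_K -> {poly int}) :
  (forall i, cg c M (F i) (G i)) -> cg c M (\sum_(i < K) F i) (\sum_(i < K) G i).
Proof.
move=> h; elim/big_rec2: _ => [|i x y _ hxy]; first exact: cg_refl.
exact: cg_add.
Qed.

Lemma cg_eq c M f g : f = g -> cg c M f g.
Proof. by move->; apply: cg_refl. Qed.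

Lemma cg_X c M f g b : f - g = 'X^M * b -> cg c M f g.
Proof. by move=> e; exists 0, b; rewrite mulr0 add0r. Qed.

Lemma cg_c c M f g a : f - g = c%:P * a -> cg c M f g.
Proof. by move=> e; exists a, 0; rewrite mulr0 addr0. Qed.

Lemma cg_dvd c d M f g : cg (c * d) M f g -> cg c M f g.
Proof. by case=> a [b e]; exists (d%:P * a), b; rewrite e polyCM mulrA. Qed.

Lemma cg_scale c d M f g : cg c M f g -> cg (d * c) M (d%:P * f) (d%:P * g).
Proof.
case=> a [b e]; exists a, (d%:P * b).
by rewrite -mulrBr e mulrDr polyCM !mulrA [_ * 'X^M]mulrC.
Qed.

Lemma cg_coef c M f g i : cg c M f g -> (i < M)%N -> exists z, f`_i - g`_i = c * z.
Proof.
case=> a [b e] hi; exists a`_i.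
by rewrite -coefB e coefD coefCM coefXnM hi addr0.
Qed.

Lemma cg_cancel c M u v a b : cg c M (u * v) 1 -> cg c M (a * u) (b * u) -> cg c M a b.
Proof.
move=> huv hab.
have h1 : cg c M a (a * u * v).
  by rewrite -mulrA; apply: cg_sym; rewrite -{2}(mulr1 a); apply: cg_mull.
have h2 : cg c M (b * u * v) b.
  by rewrite -mulrA -{2}(mulr1 b); apply: cg_mull.
apply: cg_trans h1 _; apply: cg_trans _ h2.
by rewrite ![_ * v]mulrC; apply: cg_mull.
Qed.


Definition gs (a d : nat) : {poly int} := \sum_(j < a) 'X^(j * d).

Lemma gs_mul a d : gs a d * (1 - 'X^d) = 1 - 'X^(a * d).
Proof.
elim: a => [|a IH]; first by rewrite /gs big_ord0 mul0r mul0n expr0 subrr.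
rewrite /gs big_ord_recr /= mulrDl -/(gs a d) IH mulrBr mulr1 -exprD.
by rewrite mulSn addnC addrA subrK.
Qed.

Lemma gs_comp a d e : gs a d \Po 'X^e = gs a (d * e).
Proof.
elim: a => [|a IH]; first by rewrite /gs !big_ord0 comp_poly0.
rewrite /gs !big_ord_recr /= comp_polyD -/(gs a d) -/(gs a (d * e)) IH.
by rewrite comp_Xn_poly -exprM; congr (_ + 'X^_); lia.
Qed.

Lemma size_gs a d : (size (gs a d) <= (a.-1 * d).+1)%N.
Proof.
elim: a => [|a IH]; first by rewrite /gs big_ord0 size_poly0.
rewrite /gs big_ord_recr /= -/(gs a d).
apply: (leq_trans (size_polyD _ _)); rewrite geq_max size_polyXn leqnn andbT.
by apply: leq_trans IH _; rewrite ltnS leq_mul2r leq_pred orbT.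
Qed.

Lemma one_sub_X_neq0 : (1 - 'X : {poly int}) != 0.
Proof.
apply/negP => /eqP h; have := congr1 (fun q : {poly int} => q`_0) h.
by rewrite coefB coef1 coefX coef0 /= subr0 => /eqP; rewrite oner_eq0.
Qed.

Lemma gs_mul1 a : gs a 1 * (1 - 'X) = 1 - 'X^a.
Proof. by rewrite -{2}(expr1 'X) gs_mul muln1. Qed.

Lemma gs_split a d : gs (a * d) 1 = gs d 1 * gs a d.
Proof.
apply: (mulIf one_sub_X_neq0); rewrite gs_mul1 mulrC mulrA (mulrC _ (gs d 1)) gs_mul1.
by rewrite mulrC gs_mul mulnC.
Qed.


Definition cc (p j : nat) : int := (-1) ^+ j * ('C(p, j) %/ p)%N%:Z.
Definition T (p : nat) : {poly int} := \poly_(j < p) cc p j.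

Lemma keyT (p : nat) : prime p -> odd p ->
  (1 - 'X : {poly int}) ^+ p = 1 - 'X^p + (p%:Z)%:P * T p.
Proof.
move=> pp op; rewrite exprBn /T poly_def mulr_sumr.
case: p pp op => [//|q] pp op.
have q1 : (1 <= q)%N by case: q pp {op} => //.
rewrite big_ord_recl big_ord_recr /= big_ord_recl /=.
have -> : cc q.+1 0 = 0 by rewrite /cc bin0 divn_small.
rewrite scale0r mulr0 add0r expr0 mul1r expr1n mulr1 bin0 mulr1n.
rewrite /bump leq0n add1n subnn expr0 mulr1 binn mulr1n.
rewrite -signr_odd op expr1 mulN1r.
have -> : forall a b c : {poly int}, a + (b + - c) = a - c + b.
  by move=> a b c; ring.
congr (_ + _); apply: eq_bigr => i _.
rewrite /bump leq0n add1n expr1n mulr1 /cc.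
have e : (q.+1)%:Z * ((-1)^+i.+1 * ('C(q.+1,i.+1) %/ q.+1)%N%:Z) =
    (-1)^+i.+1 * ('C(q.+1,i.+1))%:R.
  rewrite mulrCA -PoszM mulnC divnK ?natz //.
  apply: prime_dvd_bin => //=; rewrite ltnS; exact: ltn_ord.
rewrite -mul_polyC mulrA -polyCM e polyCM rmorphXn /= polyCN polyC1 polyC_natr.
by rewrite -mulr_natr; ring.
Qed.


Lemma ndvd_fact p m : prime p -> (m < p)%N -> ~~ (p %| m`!)%N.
Proof.
move=> hp; elim: m => [|m IH] hm.
  by rewrite fact0 dvdn1; apply/negP => /eqP h; move: hp; rewrite h.
rewrite factS Euclid_dvdM // negb_or IH ?andbT; last by apply: ltnW.
apply/negP => /dvdn_leq h; have := h isT; lia.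
Qed.

Lemma cc_ndvd p j : prime p -> (0 < j < p)%N -> ~~ (p %| `|cc p j|)%N.
Proof.
move=> hp /andP [j0 jp]; rewrite /cc abszMsign /=.
have hd : (p %| 'C(p, j))%N by apply: prime_dvd_bin => //; rewrite j0.
have := bin_fact (ltnW jp); rewrite -(divnK hd).
set m := ('C(p, j) %/ p)%N; set X := (j`! * (p - j)`!)%N.
case: p hp jp hd m X => [//|q] hp jp hd m X.
rewrite factS mulnK // => e.
have e2 : (m * X = q`!)%N.
  apply/eqP; rewrite -(eqn_pmul2l (ltn0Sn q)) -e; apply/eqP.
  by rewrite mulnA [(q.+1 * m)%N]mulnC.
apply/negP => hm; move: (ndvd_fact hp (ltnSn q)); rewrite -e2.
by rewrite dvdn_mulr.
Qed.

Lemma T1 p : prime p -> odd p -> (T p).[1] = 0.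
Proof.
move=> hp op; have := congr1 (fun q : {poly int} => q.[1]) (keyT hp op).
rewrite /= !hornerE subrr expr0n /= (gtn_eqF (prime_gt0 hp)) expr1n subrr add0r.
move/esym/eqP; rewrite mulf_eq0 => /orP [|/eqP //].
by move=> /eqP [h]; move: hp; rewrite h.
Qed.


Lemma comp_polyXn_exp (q r : {poly int}) k : (q ^+ k) \Po r = (q \Po r) ^+ k.
Proof.
elim: k => [|k IH]; first by rewrite !expr0 -polyC1 comp_polyC.
by rewrite !exprS comp_polyM IH.
Qed.

Lemma keyTi p i : prime p -> odd p ->
  (1 - 'X^(p ^ i) : {poly int}) ^+ p =
    1 - 'X^(p ^ i.+1) + (p%:Z)%:P * (T p \Po 'X^(p ^ i)).
Proof.
move=> hp op; have := congr1 (fun q => q \Po 'X^(p ^ i)) (keyT hp op).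
rewrite /= comp_polyXn_exp comp_polyB -polyC1 comp_polyC comp_polyX => ->.
rewrite comp_polyD comp_polyB comp_polyC comp_polyM comp_polyC comp_Xn_poly.
by rewrite -exprM expnS mulnC.
Qed.

Lemma cg_XM c M k : (M <= k)%N -> cg c M (1 - 'X^k) 1.
Proof.
move=> h; apply: (@cg_X _ _ _ _ (- 'X^(k - M))).
by rewrite addrAC subrr add0r mulrN -exprD subnKC.
Qed.

Lemma cg_gu c N d : (0 < d)%N -> cg c N (gs N d * (1 - 'X^d)) 1.
Proof. by move=> h; rewrite gs_mul; apply: cg_XM; rewrite leq_pmulr. Qed.

Definition V (p N : nat) : {poly int} := T p * gs N p.
Definition Sf (p N K : nat) : {poly int} := \sum_(i < K) (V p N \Po 'X^(p ^ i)).

Lemma V_comp p N i : V p N \Po 'X^(p ^ i) = (T p \Po 'X^(p ^ i)) * gs N (p ^ i.+1).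
Proof. by rewrite /V comp_polyM gs_comp expnS. Qed.

Lemma factor_step c p N i : prime p -> odd p -> (0 < N)%N ->
  cg c N ((1 - 'X^(p ^ i)) ^+ p.-1)
    ((gs N (p ^ i) * (1 - 'X^(p ^ i.+1))) * (1 + (p%:Z)%:P * (V p N \Po 'X^(p ^ i)))).
Proof.
move=> hp op N0.
have g0 : forall j, cg c N (gs N (p ^ j) * (1 - 'X^(p ^ j))) 1.
  by move=> j; apply: cg_gu; rewrite expn_gt0 prime_gt0.
set u := (1 - 'X^(p ^ i)); set u' := (1 - 'X^(p ^ i.+1)).
set g := gs N (p ^ i); set g' := gs N (p ^ i.+1).
have h1 : cg c N (u ^+ p.-1) (g * u ^+ p).
  rewrite -(prednK (prime_gt0 hp)) exprS mulrA.
  rewrite -{1}(mul1r (u ^+ p.-1)); apply: cg_mul; last exact: cg_refl.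
  by apply: cg_sym; apply: g0.
apply: (cg_trans h1); rewrite keyTi // -/u' V_comp -/g'.
set t := T p \Po 'X^(p ^ i).
rewrite [g * (u' + _)]mulrDr [g * u' * _]mulrDr mulr1; apply: cg_add; first exact: cg_refl.
have -> : g * u' * ((p%:Z)%:P * (t * g')) = (g * ((p%:Z)%:P * t)) * (g' * u') by ring.
rewrite -{1}(mulr1 (g * _)); apply: cg_mull; apply: cg_sym; exact: g0.
Qed.

Lemma prod_telescope c p N K : prime p -> (0 < N)%N ->
  cg c N (\prod_(i < K) (gs N (p ^ i) * (1 - 'X^(p ^ i.+1))))
         (gs N 1 * (1 - 'X^(p ^ K))).
Proof.
move=> hp N0; elim: K => [|K IH].
  rewrite big_ord0 expn0; apply: cg_sym.
  exact: cg_gu.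
rewrite big_ord_recr /=.
apply: (cg_trans (cg_mul IH (cg_refl _ _ _))).
rewrite -!mulrA; apply: cg_mull.
rewrite mulrA [_ * gs N _]mulrC -{2}(mul1r (1 - 'X^(p ^ K.+1))).
apply: cg_mul; last exact: cg_refl.
by apply: cg_gu; rewrite expn_gt0 prime_gt0.
Qed.

Lemma prod_onep (c : int) M K (a : nat -> {poly int}) :
  cg (c ^+ 2) M (\prod_(i < K) (1 + c%:P * a i)) (1 + c%:P * \sum_(i < K) a i).
Proof.
elim: K => [|K IH]; first by rewrite !big_ord0 mulr0 addr0; exact: cg_refl.
rewrite !big_ord_recr /=.
apply: (cg_trans (cg_mul IH (cg_refl _ _ _))).
set S := \sum_(i < K) a i.
apply: (@cg_c _ _ _ _ (S * a K)); rewrite polyC_exp; ring.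
Qed.

Lemma Pstep p N : prime p -> odd p -> (0 < N)%N ->
  cg ((p%:Z) ^+ 2) N (\prod_(i < N) (1 - 'X^(p ^ i)) ^+ p.-1)
     (gs N 1 * (1 + (p%:Z)%:P * Sf p N N)).
Proof.
move=> hp op N0.
apply: (cg_trans (cg_prod (fun i : 'I_N => factor_step _ i hp op N0))).
rewrite big_split /=.
apply: (cg_trans (cg_mul (prod_telescope _ N hp N0)
   (prod_onep _ _ _ (fun i => V p N \Po 'X^(p ^ i))))).
rewrite /Sf -{2}(mulr1 (gs N 1)); apply: cg_mul; last exact: cg_refl.
apply: cg_mull; apply: cg_XM.
by apply: ltnW; apply: ltn_expl; apply: prime_gt1.
Qed.


Lemma pow_onep (c : int) M m (a : {poly int}) :
  cg (c ^+ 2) M ((1 + c%:P * a) ^+ m) (1 + c%:P * (a *+ m)).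
Proof.
elim: m => [|m IH]; first by rewrite expr0 mulr0n mulr0 addr0; exact: cg_refl.
rewrite [_ ^+ m.+1]exprSr; apply: (cg_trans (cg_mul IH (cg_refl _ _ _))).
apply: (@cg_c _ _ _ _ ((a *+ m) * a)); rewrite polyC_exp mulrS; ring.
Qed.

Lemma main_cong p s n : prime p -> odd p -> (0 < s)%N ->
  cg ((p%:Z) ^+ 2) n.+1
     (\prod_(i < n.+1) (geom_trunc n (p ^ i)) ^+ ((p - 1) * (p ^ s - 1)))
     ((1 - 'X) ^+ (p ^ s - 1) * (1 + (p%:Z)%:P * Sf p n.+1 n.+1)).
Proof.
move=> hp op s0.
set c := (p%:Z) ^+ 2; set N := n.+1; set k := ((p - 1) * (p ^ s - 1))%N.
set S := Sf p N N; set m := (p ^ s - 1)%N.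
set F := \prod_(i < N) _.
set E := \prod_(i < N) (1 - 'X^(p ^ i) : {poly int}) ^+ k.
set H := (1 - 'X) ^+ m * _.
have N0 : (0 < N)%N by [].
have FE : cg c N (F * E) 1.
  rewrite /F /E -big_split /=.
  apply: (@cg_trans _ _ _ (\prod_(i < N) (1 : {poly int}))); last first.
    by rewrite big1_eq; exact: cg_refl.
  apply: cg_prod => i; rewrite -exprMn -[X in cg _ _ _ X](expr1n _ k).
  apply: cg_exp; rewrite /geom_trunc -/(gs N (p ^ i)).
  by apply: cg_gu; rewrite expn_gt0 prime_gt0.
have EE : E = (\prod_(i < N) (1 - 'X^(p ^ i) : {poly int}) ^+ p.-1) ^+ m.
  by rewrite /E -prodrXl; apply: eq_bigr => i _; rewrite -exprM /k subn1.
have Ec : cg c N E ((gs N 1 * (1 + (p%:Z)%:P * S)) ^+ m).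
  by rewrite EE; apply: cg_exp; apply: Pstep.
have HE : cg c N (H * E) 1.
  apply: (cg_trans (cg_mull H Ec)).
  have m1 : (m.+1 = p ^ s)%N by rewrite /m subn1 prednK // expn_gt0 prime_gt0.
  have -> : H * (gs N 1 * (1 + (p%:Z)%:P * S)) ^+ m =
      ((1 - 'X) * gs N 1) ^+ m * (1 + (p%:Z)%:P * S) ^+ (p ^ s).
    rewrite /H -m1 exprSr !exprMn; ring.
  rewrite -[X in cg _ _ _ X](mulr1 1); apply: cg_mul.
    rewrite -[X in cg _ _ _ X](expr1n _ m); apply: cg_exp; rewrite mulrC gs_mul1; exact: cg_XM.
  apply: (cg_trans (pow_onep _ _ _ _)).
  apply: (@cg_c _ _ _ _ (S *+ (p ^ s.-1))).
  have ps : (p ^ s = p * p ^ s.-1)%N by rewrite -expnS prednK.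
  rewrite addrAC subrr add0r ps mulnC mulrnA polyC_exp.
  set Y := S *+ p ^ s.-1; rewrite -mulr_natr -polyC_natr natz; ring.
have FH : cg c N F H.
  apply: (@cg_trans _ _ _ (F * (H * E))).
    by rewrite -{1}(mulr1 F); apply: cg_mull; apply: cg_sym.
  rewrite mulrCA -{2}(mulr1 H); apply: cg_mull; exact: FE.
exact: FH.
Qed.


Lemma comp_sum (I : Type) (r : seq I) (P : pred I) (F : I -> {poly int}) q :
  (\sum_(i <- r | P i) F i) \Po q = \sum_(i <- r | P i) (F i \Po q).
Proof.
elim/big_rec2: _ => [|i x y _ e]; [exact: comp_poly0 | by rewrite comp_polyD e].
Qed.

Lemma XnXn a b : ('X^a : {poly int}) \Po 'X^b = 'X^(a * b).
Proof. by rewrite comp_Xn_poly -exprM mulnC. Qed.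

Lemma Sf_rec p N K : Sf p N K.+1 = V p N + (Sf p N K \Po 'X^p).
Proof.
rewrite /Sf big_ord_recl /= expn0 expr1 comp_polyXr comp_sum; congr (_ + _).
apply: eq_bigr => i _; rewrite -comp_polyA XnXn /bump leq0n add1n expnS mulnC.
by [].
Qed.

Lemma Sf_split p N a b : Sf p N (a + b) = Sf p N a + (Sf p N b \Po 'X^(p ^ a)).
Proof.
elim: a => [|a IH].
  by rewrite add0n /Sf big_ord0 add0r expn0 expr1 comp_polyXr.
rewrite addSn !Sf_rec IH comp_polyD -addrA; congr (_ + (_ + _)).
by rewrite -comp_polyA XnXn expnS mulnC.
Qed.

Lemma coefT p r : (T p)`_r = if (r < p)%N then cc p r else 0.
Proof. by rewrite /T coef_poly. Qed.

Lemma V_eq p N : V p N = T p - T p * 'X^(p * N) + 'X^p * V p N.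
Proof.
set v := V p N; set t := T p.
have e2 : v * (1 - 'X^p) = t * (1 - 'X^(N * p)) by rewrite /v /V -mulrA gs_mul.
apply/eqP; rewrite -subr_eq0; apply/eqP.
have -> : v - (t - t * 'X^(p * N) + 'X^p * v) = v * (1 - 'X^p) - t * (1 - 'X^(N * p)).
  by rewrite mulnC; ring.
by rewrite e2 subrr.
Qed.

Lemma coefV p N r : (0 < p)%N -> (r < p * N)%N -> (V p N)`_r = cc p (r %% p).
Proof.
move=> p0; elim/ltn_ind: r => r IH hr.
rewrite V_eq coefD coefB coefMXn coefXnM coefT hr subr0.
case: (ltnP r p) => hrp.
  by rewrite addr0 modn_small.
rewrite add0r IH; last by lia.
  by rewrite -{2}(subnK hrp) modnDr.
by rewrite ltn_subrL p0; lia.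
Qed.

Lemma cc0 p : (1 < p)%N -> cc p 0 = 0.
Proof. by move=> h; rewrite /cc bin0 divn_small. Qed.

Lemma coefSf_upper p N K q : (1 < p)%N -> (0 < q)%N -> (q < p ^ K)%N -> (q < N)%N ->
  exists j, (0 < j < p)%N /\ (Sf p N K)`_q = cc p j.
Proof.
move=> p1; elim: K q => [|K IH] q q0 qK qN.
  by move: qK; rewrite expn0; lia.
have p0 : (0 < p)%N by lia.
rewrite Sf_rec coefD coef_comp_poly_Xn // coefV //; last first.
  by apply: (leq_trans qN); rewrite leq_pmull.
case: (boolP (p %| q)%N) => hd.
  have h1 : (0 < q %/ p)%N by rewrite divn_gt0 // dvdn_leq.
  have h2 : (q %/ p < p ^ K)%N by rewrite ltn_divLR // -expnSr.
  have h3 : (q %/ p < N)%N by apply: (leq_ltn_trans (leq_div _ _)).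
  have [j [hj e]] := IH (q %/ p)%N h1 h2 h3.
  by exists j; split => //; rewrite e (eqP hd) cc0 // add0r.
exists (q %% p)%N; split; last by rewrite addr0.
rewrite ltn_pmod // andbT lt0n; apply: contra hd => /eqP h.
by apply/dvdnP; exists (q %/ p)%N; rewrite {1}(divn_eq q p) h addn0.
Qed.

Lemma coef_window d (Y : {poly int}) n : (0 < d)%N ->
  (gs d 1 * (Y \Po 'X^d))`_n = Y`_(n %/ d).
Proof.
move=> d0; rewrite /gs mulr_suml coef_sum.
have e : (n - n %% d = n %/ d * d)%N by rewrite {1}(divn_eq n d) addnK.
rewrite (bigD1 (Ordinal (ltn_pmod n d0))) //= big1 ?addr0.
  rewrite muln1 coefXnM ltnNge leq_mod /= coef_comp_poly_Xn // e dvdn_mull //.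
  by rewrite mulnK.
move=> i hi; rewrite muln1 coefXnM; case: ltnP => // hin.
rewrite coef_comp_poly_Xn //; case: ifP => // hdv.
exfalso; move: hi => /eqP; apply; apply: val_inj => /=.
have := hdv => /dvdnP [z hz].
rewrite -(subnK hin) hz modnMDl modn_small //.
Qed.


Lemma size_W p i b : (0 < p)%N -> (0 < b)%N ->
  (size ((T p \Po 'X^(p ^ i)) * gs b (p ^ i.+1))%R <= b * p ^ i.+1)%N.
Proof.
move=> p0 b0.
have h1 : (size (T p \Po 'X^(p ^ i)) <= ((p - 1) * p ^ i).+1)%N.
  apply: (leq_trans (size_comp_poly_leq _ _)); rewrite size_polyXn /= ltnS leq_mul2r.
  by rewrite -subn1 leq_sub2r ?size_poly ?orbT.
have h2 := size_gs b (p ^ i.+1).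
apply: (leq_trans (size_mul_leq _ _)).
have hx : (0 < p ^ i)%N by rewrite expn_gt0 p0.
move: h1 h2; rewrite expnS; set x := (p ^ i)%N => h1 h2.
have e : (b.-1 * (p * x) + p * x = b * (p * x))%N.
  by rewrite addnC -mulSn prednK.
have e2 : ((p - 1) * x + x = p * x)%N.
  by rewrite addnC -mulSn subn1 prednK.
lia.
Qed.

Lemma lower_zero p N s n i : prime p -> odd p -> (i < s)%N -> (p ^ s <= n)%N ->
  (n < N)%N -> (gs (p ^ s) 1 * (V p N \Po 'X^(p ^ i)))`_n = 0.
Proof.
move=> hp op hi hs hn.
have p0 := prime_gt0 hp.
set b := (p ^ (s - i.+1))%N.
have b0 : (0 < b)%N by rewrite expn_gt0 p0.
have hb : (b * p ^ i.+1 = p ^ s)%N by rewrite -expnD subnK.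
set W := (T p \Po 'X^(p ^ i)) * gs b (p ^ i.+1).
have -> : gs (p ^ s) 1 * (V p N \Po 'X^(p ^ i)) =
    (gs (p ^ i.+1) 1 * gs N (p ^ i.+1)) * W.
  by rewrite -{1}hb gs_split V_comp /W; ring.
rewrite -gs_split.
have rW : root W 1.
  by rewrite /root /W hornerM horner_comp hornerXn expr1n T1 // mul0r.
have [Z eZ] := factor_theorem _ _ rW.
have hc : cg 0 N (gs (N * p ^ i.+1) 1 * W) (- Z).
  have -> : gs (N * p ^ i.+1) 1 * W = - Z * (gs (N * p ^ i.+1) 1 * (1 - 'X)).
    by rewrite eZ polyC1; ring.
  rewrite -[X in cg _ _ _ X]mulr1; apply: cg_mull; rewrite gs_mul1; apply: cg_XM.
  by rewrite leq_pmulr // expn_gt0 p0.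
have [z hz] := cg_coef hc hn.
move: hz; rewrite mul0r => /eqP; rewrite subr_eq0 => /eqP ->.
rewrite coefN nth_default ?oppr0 //.
have hW := size_W i p0 b0; rewrite -/W hb in hW.
case: (eqVneq Z 0) => [->|Z0]; first by rewrite size_poly0.
move: hW; rewrite eZ size_Mmonic ?monicXsubC // size_XsubC addn2 /=.
move=> h; apply: leq_trans hs; exact: ltnW.
Qed.

Lemma lower_sum p N s n : prime p -> odd p -> (p ^ s <= n)%N -> (n < N)%N ->
  (gs (p ^ s) 1 * Sf p N s)`_n = 0.
Proof.
move=> hp op hs hn; rewrite /Sf mulr_sumr coef_sum big1 // => i _.
exact: lower_zero.
Qed.


Lemma frob p M s : prime p -> odd p ->
  cg (p%:Z) M ((1 - 'X) ^+ (p ^ s)) (1 - 'X^(p ^ s)).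
Proof.
move=> hp op; elim: s => [|s IH]; first by rewrite expn0 expr1; exact: cg_refl.
rewrite expnSr exprM; apply: (cg_trans (cg_exp _ IH)).
apply: (@cg_c _ _ _ _ (T p \Po 'X^(p ^ s))).
by rewrite keyTi // -expnSr addrAC subrr add0r.
Qed.

Lemma geo_cong p M s : prime p -> odd p ->
  cg (p%:Z) M ((1 - 'X) ^+ (p ^ s - 1)) (gs (p ^ s) 1).
Proof.
move=> hp op; apply: (@cg_cancel _ _ (1 - 'X) (gs M 1)).
  by rewrite mulrC gs_mul1; apply: cg_XM.
rewrite gs_mul1 -exprSr subn1 prednK ?expn_gt0 ?prime_gt0 //.
exact: frob.
Qed.

Lemma size_1X : size (1 - 'X : {poly int}) = 2%N.
Proof. by rewrite -opprB size_opp -polyC1 size_XsubC. Qed.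

Lemma main_thm (p s n : nat) (hp : prime p) (hp3 : (3 <= p)%N)
  (hs : (0 < s)%N) (hn : (p ^ s < n)%N) :
  nu p (A p ((p - 1) * (p ^ s - 1))%N n) = 1%N.
Proof.
have op : odd p by case: (even_prime hp) => // h; move: hp3; rewrite h.
have p1 := prime_gt1 hp; have p0 := prime_gt0 hp.
set N := n.+1; set m := (p ^ s - 1)%N; set S := Sf p N N.
have hmc := main_cong n hp op hs.
have [z1 h1] := cg_coef hmc (ltnSn n).
rewrite /A; set F := \prod_(i < n.+1) _.
have hH : ((1 - 'X) ^+ m * (1 + (p%:Z)%:P * S))`_n =
    p%:Z * ((1 - 'X) ^+ m * S)`_n.
  rewrite mulrDr mulr1 coefD nth_default ?add0r.
    by rewrite mulrCA coefCM.
  apply: (leq_trans (size_poly_exp_leq _ _)); rewrite size_1X /= mul1n /m.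
  by rewrite subn1 prednK ?expn_gt0 // ltnW.
have [z2 h2] := cg_coef (cg_mul (geo_cong N s hp op) (cg_refl _ _ S)) (ltnSn n).
have sN : (s <= N)%N.
  by have := ltn_expl s p1; lia.
have hS : S = Sf p N s + (Sf p N (N - s) \Po 'X^(p ^ s)).
  by rewrite /S -Sf_split subnKC.
have ps0 : (0 < p ^ s)%N by rewrite expn_gt0 p0.
have [j [hj ej]] : exists j, (0 < j < p)%N /\ (Sf p N (N - s))`_(n %/ p ^ s) = cc p j.
  apply: coefSf_upper => //.
  - by rewrite divn_gt0 // ltnW.
  - rewrite ltn_divLR // -expnD subnK //.
    by apply: (leq_trans (ltn_expl _ p1)); rewrite leq_exp2l.
  - by apply: (leq_ltn_trans (leq_div _ _)).
have hG : (gs (p ^ s) 1 * S)`_n = cc p j.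
  by rewrite hS mulrDr coefD lower_sum // ?add0r ?coef_window // ltnW.
rewrite hG in h2; rewrite hH in h1.
set w := cc p j + p%:Z * (z2 + z1).
have eF : F`_n = p%:Z * w.
  have -> : F`_n = F`_n - p%:Z * ((1 - 'X) ^+ m * S)`_n + p%:Z * ((1 - 'X) ^+ m * S)`_n.
    by rewrite subrK.
  rewrite h1 -(subrK (cc p j) (_ `_ n)) h2 /w; ring.
have nd : ~~ (p %| `|w|)%N.
  apply/negP => hd.
  have hd' : (p%:Z %| w)%Z by rewrite dvdzE.
  have hc : (p%:Z %| cc p j)%Z.
    have -> : cc p j = w - p%:Z * (z2 + z1) by rewrite /w addrK.
    by rewrite rpredB // dvdz_mulr.
  by move: hc; rewrite dvdzE /= (negbTE (cc_ndvd hp hj)).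
have w0 : (0 < `|w|)%N by rewrite lt0n; apply: contra nd => /eqP ->; rewrite dvdn0.
rewrite /nu eF abszM /= lognM // logn_prime // eqxx logn_coprime //.
by rewrite prime_coprime.
Qed.

Local Close Scope ring_scope.

Theorem theorem3p1 (p s n : nat) (hp : prime p) (hp3 : (3 <= p)%N)
  (hs : (0 < s)%N) (hn : (p ^ s < n)%N) :
  nu p (A p ((p - 1) * (p ^ s - 1)) n) = 1%N.
Proof. exact: main_thm. Qed.
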